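(* Let $R$ be a ring such that $\mathrm{char}(R)$ is finite and $J(R)$ is nil of bounded index. If the group $U(R/J(R))$ has finite exponent, then so does $U(R)$. If additionally $R/J(R)$ is clean, then $R$ is $n$-torsion clean for some $n\in\mathbb{N}$.
   Context: All rings are associative with identity; $\mathrm{char}(R):=|1\cdot\mathbb{Z}|$, $J(R)$ is the Jacobson radical, $U(\cdot)$ the unit group. An ideal $I$ is nil of bounded index if there is $k$ with $r^k=0$ for all $r\in I$. A ring is clean if every element is a sum of an idempotent and a unit. A ring $R$ is $n$-torsion clean if every $r\in R$ can be written $r=e+u$ with $e^2=e$, $u$ a unit, $u^n=1$, and $n$ is the smallest natural number with this property. *)

(* Defs.v *)
From HB Require Import structures.
From mathcomp Require Import all_boot all_order all_algebra.
Set Implicit Arguments. Unset Strict Implicit. Unset Printing Implicit Defensive.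
Import GRing.Theory.
Local Open Scope ring_scope.

(* All rings: associative with identity (possibly the zero ring, possibly
   noncommutative, possibly infinite): MathComp's pzRingType. *)

Definition is_unit (R : pzRingType) (u : R) : Prop :=
  exists v : R, u * v = 1 /\ v * u = 1.

Definition finite_char (R : pzRingType) : Prop :=
  exists n : nat, (0 < n)%N /\ n%:R = 0 :> R.

Definition jacobson (R : pzRingType) (x : R) : Prop :=
  forall r : R, is_unit (1 - r * x).

Definition nil_bounded_index (R : pzRingType) (I : R -> Prop) : Prop :=
  exists k : nat, forall r : R, I r -> r ^+ k = 0.

Definition units_finite_exponent (R : pzRingType) : Prop :=
  exists m : nat, (0 < m)%N /\ forall u : R, is_unit u -> u ^+ m = 1.

(* The quotient R / J(R), written out on coset representatives:
   the coset a + J is a unit of R/J iff there is b with ab - 1, ba - 1 in J. *)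
Definition unit_mod_J (R : pzRingType) (a : R) : Prop :=
  exists b : R, jacobson (a * b - 1) /\ jacobson (b * a - 1).

Definition quot_units_finite_exponent (R : pzRingType) : Prop :=
  exists m : nat, (0 < m)%N /\
    forall a : R, unit_mod_J a -> jacobson (a ^+ m - 1).

Definition quot_clean (R : pzRingType) : Prop :=
  forall r : R, exists e u : R,
    jacobson (e * e - e) /\ unit_mod_J u /\ jacobson (r - (e + u)).

Definition torsion_clean_with (R : pzRingType) (n : nat) : Prop :=
  forall r : R, exists e u : R,
    e * e = e /\ is_unit u /\ u ^+ n = 1 /\ r = e + u.

Definition n_torsion_clean (R : pzRingType) (n : nat) : Prop :=
  (0 < n)%N /\ torsion_clean_with R n /\
  forall m : nat, (0 < m)%N -> (m < n)%N -> ~ torsion_clean_with R m.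

(* Main.v *)
From HB Require Import structures.
From mathcomp Require Import all_boot all_order all_algebra.
From mathcomp Require Import ring zify.
From Stdlib Require Import Classical.
Require Import Defs.
Import GRing.Theory.
Local Open Scope ring_scope.

Section Basic.
Variable R : pzRingType.
Implicit Types a b p q r s x y j : R.

Lemma unitM a b : is_unit a -> is_unit b -> is_unit (a*b).
Proof.
move=> [va [h1 h2]] [vb [h3 h4]]; exists (vb*va); split.
  by rewrite -mulrA (mulrA b) h3 mul1r h1.
by rewrite -mulrA (mulrA va) h2 mul1r h4.
Qed.

Lemma jac0 : jacobson (0 : R).
Proof. by move=> r; rewrite mulr0 subr0; exists 1; rewrite mulr1. Qed.

Lemma jacL s y : jacobson y -> jacobson (s * y).
Proof. by move=> h r; rewrite mulrA; exact: h. Qed.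

Lemma jacD a b : jacobson a -> jacobson b -> jacobson (a + b).
Proof.
move=> ha hb r; have [v [h1 h2]] := ha r; have [w [h3 h4]] := hb (v * r).
have -> : 1 - r * (a + b) = (1 - r * a) * (1 - v * r * b).
  rewrite mulrBr mulr1 !mulrA h1 mul1r mulrDr opprD addrA //.
apply: unitM; last by [].
by exists v.
Qed.

Lemma jacN a : jacobson a -> jacobson (- a).
Proof. by move=> h; rewrite -mulN1r; apply: jacL. Qed.

Lemma jacB a b : jacobson a -> jacobson b -> jacobson (a - b).
Proof. by move=> ha hb; apply: jacD => //; apply: jacN. Qed.

Lemma jacobson_lemma p q : is_unit (1 - p * q) -> is_unit (1 - q * p).
Proof.
move=> [v [h1 h2]]; exists (1 + q * v * p).
have e : q * ((1 - p * q) * v) * p = q * v * p - q * p * q * v * p by rewrite mulrBl mul1r mulrBr mulrBl !mulrA.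
rewrite h1 mulr1 in e.
have e' : q * (v * (1 - p * q)) * p = q * v * p - q * v * p * q * p by rewrite mulrBr mulr1 mulrBr mulrBl !mulrA.
rewrite h2 mulr1 in e'.
split.
  by rewrite mulrDr mulr1 mulrBl mul1r !mulrA -e subrK.
by rewrite mulrDl mul1r mulrBr mulr1 !mulrA -e' subrK.
Qed.

Lemma jacR y s : jacobson y -> jacobson (y * s).
Proof.
move=> h r; rewrite mulrA; apply: jacobson_lemma; rewrite mulrA; exact: h.
Qed.

Lemma jac_unit j : jacobson j -> is_unit (1 + j).
Proof. by move=> h; have := h (-1); rewrite mulN1r opprK. Qed.

Lemma lift_unit a : unit_mod_J a -> is_unit a.
Proof.
move=> [b [h1 h2]].
have [c [c1 c2]] : is_unit (a * b) by have := @jac_unit _ h1; rewrite addrC subrK.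
have [d [d1 d2]] : is_unit (b * a) by have := @jac_unit _ h2; rewrite addrC subrK.
have e : d * b = b * c.
  by rewrite -[d * b]mulr1 -c1 !mulrA -(mulrA d b a) d2 mul1r.
exists (b * c); split; first by rewrite mulrA c1.
by rewrite -e -mulrA d2.
Qed.

End Basic.

Lemma binom_dvd n k i : (i.+1 < k)%N -> (n %| 'C(n * k`!, i.+1))%N.
Proof.
move=> hi.
have hd : (i.+1 %| k`!)%N by apply: dvdn_fact; rewrite ltn0Sn /= ltnW.
set t := (k`! %/ i.+1)%N.
have e2 : k`! = (t * i.+1)%N by rewrite /t divnK.
have e1 := mul_bin_diag (n * k`!) i.
apply/dvdnP; exists (t * 'C((n * k`!).-1, i))%N.
apply/eqP; rewrite -(eqn_pmul2l (ltn0Sn i)) -e1 {1}e2; apply/eqP; nia.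
Qed.

Lemma unit_pow (R : pzRingType) n k m : n%:R = 0 :> R ->
  (forall r : R, jacobson r -> r ^+ k = 0) ->
  (forall a : R, unit_mod_J a -> jacobson (a ^+ m - 1)) ->
  forall u : R, is_unit u -> u ^+ (m * (n * k`!)) = 1.
Proof.
move=> hn hk hm u [v [h1 h2]].
have hu : unit_mod_J u by exists v; rewrite h1 h2 subrr; split; exact: jac0.
have hx := hk _ (hm _ hu).
rewrite exprM -[u ^+ m](subrK 1) exprD1n big_ord_recl /= expr0 bin0 mulr1n big1 ?addr0 //.
move=> [i hi] _ /=; rewrite /bump /= add1n.
case: (leqP k i.+1) => hki.
  by rewrite -(subnK hki) exprD hx mulr0 mul0rn.
have [q ->] := dvdnP (@binom_dvd n k i hki).
by rewrite mulrnA -mulr_natr hn mulr0.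
Qed.

Definition iS (S : nzRingType) : {rmorphism int -> S} := intr.
Lemma cx (S : nzRingType) (x : S) : commr_rmorph (iS S) x.
Proof. move=> a; exact: commr_int. Qed.
Arguments cx {S} x.
Local Notation ev x := (horner_morph (cx x)).

Lemma evX (S : nzRingType) (x : S) : ev x 'X = x.
Proof. exact: horner_morphX. Qed.
Arguments evX {S} x.

Lemma lift_idem_nz (S : nzRingType) (j : nat) : forall x : S,
  (x * x - x) ^+ (2 ^ j) = 0 -> jacobson (x * x - x) ->
  exists f : S, f * f = f /\ jacobson (f - x).
Proof.
elim: j => [|j IH] x hy hj.
  exists x; split; last by rewrite subrr; exact: jac0.
  by apply/eqP; rewrite -subr_eq0; apply/eqP; rewrite expn0 expr1 in hy.
pose x' := ev x (3 * 'X^2 - 2 * 'X^3).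
have eY : x * x - x = ev x ('X * 'X - 'X) by rewrite rmorphB rmorphM /= evX.
have e1 : x' * x' - x' = ev x (4 * 'X^2 - 4 * 'X - 3) * (x * x - x) ^+ 2.
  by rewrite /x' eY -rmorphXn -!rmorphM -rmorphB; congr (ev x _); ring.
have e2 : x' - x = ev x (1 - 2 * 'X) * (x * x - x).
  have -> : x' - x = ev x (3 * 'X^2 - 2 * 'X^3 - 'X) by rewrite [RHS]rmorphB /= evX.
  by rewrite eY -!rmorphM; congr (ev x _); ring.
have hc : GRing.comm (ev x (4 * 'X^2 - 4 * 'X - 3)) ((x * x - x) ^+ 2).
  by rewrite /GRing.comm eY -rmorphXn -!rmorphM mulrC.
have h1 : (x' * x' - x') ^+ (2 ^ j) = 0.
  by rewrite e1 exprMn_comm // -exprM -expnS hy mulr0.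
have h2 : jacobson (x' * x' - x') by rewrite e1 (expr2 (x * x - x)) mulrA; apply: jacL.
have [f [f1 f2]] := IH x' h1 h2.
exists f; split => //.
by rewrite -(subrK x' f) -addrA e2; apply: jacD => //; apply: jacL.
Qed.

Definition nzR {R : pzRingType} (h : (1:R) != 0) : Type := R.
HB.instance Definition _ (R : pzRingType) (h : (1:R) != 0) := GRing.PzRing.on (nzR h).
HB.instance Definition _ (R : pzRingType) (h : (1:R) != 0) :=
  GRing.PzSemiRing_isNonZero.Build (nzR h) (h : (1 : nzR h) != 0).

Lemma lift_idem (R : pzRingType) (k : nat) (x : R) :
  (forall r : R, jacobson r -> r ^+ k = 0) -> jacobson (x * x - x) ->
  exists f : R, f * f = f /\ jacobson (f - x).
Proof.
move=> hk hj.
case: (eqVneq (1 : R) 0) => h.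
  have z : forall y : R, y = 0 by move=> y; rewrite -[y]mulr1 h mulr0.
  exists 0; split; first by rewrite mulr0.
  by move=> r; exists 0; rewrite !(z (_ * 0)) (z 1).
have hy : (x * x - x) ^+ (2 ^ k) = 0.
  have hk2 : (k <= 2 ^ k)%N by apply: ltnW; apply: ltn_expl.
  by rewrite -(subnK hk2) exprD hk // mulr0.
exact: (@lift_idem_nz (nzR h) k x hy hj).
Qed.

Lemma min_exists (P : nat -> Prop) M : (0 < M)%N -> P M ->
  exists n, (0 < n)%N /\ P n /\ forall m, (0 < m)%N -> (m < n)%N -> ~ P m.
Proof.
elim/ltn_ind: M => M IH hM hP.
case: (classic (exists m, (0 < m)%N /\ (m < M)%N /\ P m)) => [[m [h0 [h1 h2]]]|hn].
  exact: IH m h1 h0 h2.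
exists M; split => //; split => // m h0 h1 Pm; apply: hn; exists m; tauto.
Qed.

Theorem corollary2p11 (R : pzRingType) :
  finite_char R ->
  nil_bounded_index (@jacobson R) ->
  quot_units_finite_exponent R ->
  units_finite_exponent R /\
  (quot_clean R -> exists n : nat, n_torsion_clean R n).
Proof.
move=> [n [n0 hn]] [k hk] [m [m0 hm]].
have hM : (0 < m * (n * k`!))%N by rewrite !muln_gt0 m0 n0 fact_gt0.
have hpow := @unit_pow R n k m hn hk hm.
split; first by exists (m * (n * k`!))%N.
move=> hc.
apply: (@min_exists (torsion_clean_with R) _ hM).
move=> r; have [e [u [he [hu hr]]]] := hc r.
have [f [f1 f2]] := @lift_idem R k e hk he.
have [b [b1 b2]] := hu.
have ht : jacobson (r - f - u).
  have -> : r - f - u = (r - (e + u)) - (f - e).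
    by rewrite opprD opprB !addrA (addrAC _ (- u)) subrK addrAC.
  exact: jacB.
have hw : unit_mod_J (r - f).
  exists b; split.
    have -> : (r - f) * b - 1 = (u * b - 1) + (r - f - u) * b.
      by rewrite [in RHS]mulrBl [RHS]addrC -addrA addKr.
    by apply: jacD => //; apply: jacR.
  have -> : b * (r - f) - 1 = (b * u - 1) + b * (r - f - u).
    by rewrite [in RHS]mulrBr [RHS]addrC -addrA addKr.
  by apply: jacD => //; apply: jacL.
have wu := @lift_unit R _ hw.
exists f, (r - f); split => //; split => //; split; first exact: hpow.
by rewrite addrC subrK.
Qed.
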